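(* There is a constant $c$ such that for every $\ell\in\mathbb N$ and every finite alphabet $\Gamma_2$ disjoint from $\Gamma_1=\{0,1,\mathsf{inc},\mathsf{dec}\}$, there are $\ell$ DFAs $A_1,\dots,A_\ell$ over $\Gamma_1\cup\Gamma_2$, each with at most $c\cdot\ell$ states, such that $L'_\ell=\bigcap_{i=1}^{\ell}L(A_i)$.
   Context: For a word $b_1b_2\cdots b_\ell\in\{0,1\}^\ell$ let $\mathsf{val}(b_1\cdots b_\ell)=\sum_i b_i 2^{\ell-i}$. Interpret $\mathsf{inc}(n)=n+1$, $\mathsf{dec}(n)=n-1$ and $a(n)=n$ for $a\in\Gamma_2$. Then $L'_\ell$ is the set of words $n_0o_1n_1o_2n_2\cdots o_kn_k$ with $k\ge 0$, each $n_i\in\{0,1\}^\ell$, each $o_i\in\{\mathsf{inc},\mathsf{dec}\}\cup\Gamma_2$, such that $\mathsf{val}(n_i)=o_i(\mathsf{val}(n_{i-1}))$ for all $0<i\le k$, $n_0=0^\ell=n_k$, if $o_i=\mathsf{inc}$ then $n_{i-1}\neq 1^\ell$, and if $o_i=\mathsf{dec}$ then $n_{i-1}\ne 0^\ell$. *)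

(* Defs.v *)
From mathcomp Require Import all_boot.
Set Implicit Arguments. Unset Strict Implicit. Unset Printing Implicit Defensive.

Inductive gamma1 := G0 | G1 | Ginc | Gdec.

(* The alphabet Gamma_1 \cup Gamma_2, with Gamma_2 disjoint from Gamma_1:
   modelled as the disjoint sum. *)
Definition letter (G2 : Type) := (gamma1 + G2)%type.

Record dfa (S : Type) := DFA {
  dstate : finType;
  dstart : dstate;
  dtrans : dstate -> S -> dstate;
  dfinal : pred dstate }.
Arguments dstate {S}. Arguments dstart {S}. Arguments dtrans {S}. Arguments dfinal {S}.

Definition accepts S (A : dfa S) (w : seq S) : bool :=
  dfinal A (foldl (dtrans A) (dstart A) w).

Definition bval (s : seq bool) : nat :=
  \sum_(i < size s) (nth false s i) * 2 ^ (size s - i.+1).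

Definition bit_letter G2 (b : bool) : letter G2 := inl (if b then G1 else G0).

(* the word n_0 o_1 n_1 ... o_k n_k *)
Definition encode G2 (n0 : seq bool) (ps : seq (letter G2 * seq bool)) :
    seq (letter G2) :=
  map (@bit_letter G2) n0 ++ flatten [seq p.1 :: map (@bit_letter G2) p.2 | p <- ps].

Definition is_op G2 (o : letter G2) : bool :=
  match o with inl Ginc | inl Gdec | inr _ => true | _ => false end.

Definition op_apply G2 (o : letter G2) (n : nat) : nat :=
  match o with inl Ginc => n.+1 | inl Gdec => n.-1 | _ => n end.

Definition Lprime (l : nat) G2 (w : seq (letter G2)) : Prop :=
  exists (n0 : seq bool) (ps : seq (letter G2 * seq bool)),
    let ns := n0 :: map snd ps in
    let os := map fst ps in
    [/\ w = encode n0 ps,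
        all (fun n => size n == l) ns,
        all (@is_op G2) os,
        n0 = nseq l false /\ last n0 (map snd ps) = nseq l false &
        forall i, i < size ps ->
          let o := nth (inl G0) os i in
          let prev := nth [::] ns i in
          let cur := nth [::] ns i.+1 in
          [/\ bval cur = op_apply o (bval prev),
              o = inl Ginc -> prev <> nseq l true &
              o = inl Gdec -> prev <> nseq l false]].

(* Main.v *)
Require Import Defs.
From mathcomp Require Import all_boot.
From mathcomp Require Import zify.
Set Implicit Arguments. Unset Strict Implicit. Unset Printing Implicit Defensive.

Lemma bval_cons b s : bval (b :: s) = b * 2 ^ size s + bval s.
Proof.
rewrite /bval /= big_ord_recl /= subn1 /=; congr (_ + _).

Qed.

Lemma bval_lt s : bval s < 2 ^ size s.
Proof.
elim: s => [|b s IH]; first by rewrite /bval big_ord0.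
rewrite bval_cons /= expnS; case: b => /=; lia.
Qed.

Lemma bval_ones s : all id s -> bval s = 2 ^ size s - 1.
Proof.
elim: s => [|b s IH]; first by rewrite /bval big_ord0.
rewrite bval_cons => /= /andP [-> /IH ->]; rewrite expnS.
have := expn_gt0 2 (size s); lia.
Qed.

Lemma bval_zeros s : all negb s -> bval s = 0.
Proof.
elim: s => [|b s IH]; first by rewrite /bval big_ord0.
by case: b => //= /IH; rewrite bval_cons => ->.
Qed.

Lemma bval_pos s : ~~ all negb s -> 0 < bval s.
Proof.
elim: s => [|b s IH] //=; rewrite bval_cons.
case: b => /=; last by move/IH; lia.
have := expn_gt0 2 (size s); lia.
Qed.

Lemma bval_inj s t : size s = size t -> bval s = bval t -> s = t.
Proof.
elim: s t => [|b s IH] [|c t] //= [Hs]; rewrite !bval_cons Hs => E.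
have := bval_lt s; have := bval_lt t; rewrite Hs => h1 h2.
case: b c E => [] [] /= E.
- by rewrite (IH t Hs) //; lia.
- lia.
- lia.
- by rewrite (IH t Hs) //; lia.
Qed.

Lemma all_id_nseq n : all id n -> n = nseq (size n) true.
Proof. by elim: n => [|b n IH] //= /andP [-> /IH <-]. Qed.
Lemma all_negb_nseq n : all negb n -> n = nseq (size n) false.
Proof. by elim: n => [|[] n IH] //= /IH <-. Qed.
Lemma nseq_all_id k : all id (nseq k true).
Proof. by elim: k. Qed.
Lemma nseq_all_negb k : all negb (nseq k false).
Proof. by elim: k. Qed.

Definition nextbit G2 (o : letter G2) (n : seq bool) (i : nat) : bool :=
  match o with
  | inl Ginc => nth false n i (+) all id (drop i.+1 n)
  | inl Gdec => nth false n i (+) all negb (drop i.+1 n)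
  | _ => nth false n i
  end.

Definition bad G2 (o : letter G2) (n : seq bool) : bool :=
  match o with
  | inl Ginc => all id n
  | inl Gdec => all negb n
  | _ => false
  end.

Lemma inc_ok n m : size m = size n ->
  (forall i, i < size n -> nth false m i = nth false n i (+) all id (drop i.+1 n)) ->
  ~~ all id n -> bval m = (bval n).+1.
Proof.
elim: n m => [|b t IH] [|c u] //= [Hs] H Hna.
have H0 := H 0 erefl; rewrite /= in H0.
have Hu : forall i, i < size t -> nth false u i = nth false t i (+) all id (drop i.+1 t).
  by move=> i hi; exact: (H i.+1 hi).
rewrite !bval_cons Hs H0.
case At: (all id t).
- move: Hna; rewrite At andbT => /negbTE ->.
  have Zu : all negb u.
    apply/(all_nthP false) => j hj; rewrite Hu -?Hs //.
    move: hj; rewrite ?Hs => hj; rewrite (all_id_nseq At) nth_nseq hj drop_nseq nseq_all_id //.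
  rewrite drop0 At (bval_zeros Zu) (bval_ones At) /=.
  have := expn_gt0 2 (size t); lia.
- rewrite drop0 At addbF (IH u Hs Hu) ?At //; lia.
Qed.

Lemma dec_ok n m : size m = size n ->
  (forall i, i < size n -> nth false m i = nth false n i (+) all negb (drop i.+1 n)) ->
  ~~ all negb n -> bval m = (bval n).-1.
Proof.
elim: n m => [|b t IH] [|c u] //= [Hs] H Hna.
have H0 := H 0 erefl; rewrite /= in H0.
have Hu : forall i, i < size t -> nth false u i = nth false t i (+) all negb (drop i.+1 t).
  by move=> i hi; exact: (H i.+1 hi).
rewrite !bval_cons Hs H0.
case At: (all negb t).
- move: Hna; rewrite At andbT negbK => ->.
  have Ou : all id u.
    apply/(all_nthP false) => j hj; rewrite Hu -?Hs //.
    move: hj; rewrite ?Hs => hj; rewrite (all_negb_nseq At) nth_nseq hj drop_nseq nseq_all_negb //.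
  rewrite drop0 At (bval_zeros At) (bval_ones Ou) Hs /=.
  have := expn_gt0 2 (size t); lia.
- have Hbv := bval_pos (negbT At).
  rewrite drop0 At addbF (IH u Hs Hu) ?At //; case: b {H H0 Hna} => /=; lia.
Qed.

Lemma arith_bwd G2 (o : letter G2) n m : size m = size n ->
  (forall i, i < size n -> nth false m i = nextbit o n i) -> ~~ bad o n ->
  bval m = op_apply o (bval n).
Proof.
move=> Hs H; case: o H => [[]|g] H /= Hb.
- by congr bval; apply/(@eq_from_nth _ false) => // i; rewrite Hs => hi; rewrite H.
- by congr bval; apply/(@eq_from_nth _ false) => // i; rewrite Hs => hi; rewrite H.
- exact: inc_ok.
- exact: dec_ok.
- by congr bval; apply/(@eq_from_nth _ false) => // i; rewrite Hs => hi; rewrite H.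
Qed.

Lemma arith_fwd G2 (o : letter G2) n m : size m = size n ->
  bval m = op_apply o (bval n) ->
  (o = inl Ginc -> n <> nseq (size n) true) ->
  (o = inl Gdec -> n <> nseq (size n) false) ->
  ~~ bad o n /\ (forall i, i < size n -> nth false m i = nextbit o n i).
Proof.
move=> Hs Hv Hi Hd.
have Hb : ~~ bad o n.
  case: o Hv Hi Hd => [[]|g] //= _ Hi Hd; apply/negP.
  - by move/all_id_nseq; apply: Hi.
  - by move/all_negb_nseq; apply: Hd.
split=> //.
set m' := mkseq (nextbit o n) (size n).
have Hm' : bval m' = op_apply o (bval n).
  by apply: arith_bwd => //; [rewrite size_mkseq | move=> i hi; rewrite nth_mkseq].
have -> : m = m' by apply: bval_inj; [rewrite size_mkseq | rewrite Hm'].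
by move=> i hi; rewrite nth_mkseq.
Qed.

Notation st l := (option ('I_l.+1 * bool * bool * bool)).

Definition bit_of G2 (a : letter G2) : option bool :=
  match a with inl G0 => Some false | inl G1 => Some true | _ => None end.

Arguments bit_of : simpl never.

Definition tr (l i : nat) G2 (s : st l) (a : letter G2) : st l :=
  match s with
  | None => None
  | Some (p, x, o, z) =>
    match bit_of a with
    | Some bt =>
      if nat_of_ord p == l then None else
      if nat_of_ord p == i then (if bt == x then Some (inord p.+1, x, true, true) else None)
      else if p < i then Some (inord p.+1, x, o, z)
      else Some (inord p.+1, x, o && bt, z && ~~ bt)
    | None =>
      if nat_of_ord p != l then None else
      match a with
      | inl Ginc => if (i == 0) && x && o then None else Some (inord 0, x (+) o, true, true)
      | inl Gdec => if (i == 0) && ~~ x && z then None else Some (inord 0, x (+) z, true, true)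
      | _ => Some (inord 0, x, true, true)
      end
    end
  end.

Definition fin l (s : st l) : bool :=
  if s is Some (p, x, _, _) then (nat_of_ord p == l) && ~~ x else false.

Definition aut l G2 (i : 'I_l) : dfa (letter G2) :=
  @DFA (letter G2) (st l) (Some (inord 0, false, true, true)) (@tr l i G2) (@fin l).

Lemma run_none l i G2 w : foldl (@tr l i G2) None w = None.
Proof. by elim: w. Qed.

Lemma bit_of_bit G2 b : bit_of (@bit_letter G2 b) = Some b.
Proof. by case: b. Qed.

Lemma run_bits l i G2 x s : i < l -> size s <= l ->
  foldl (@tr l i G2) (Some (inord 0, x, true, true)) (map (@bit_letter G2) s) =
  if (i < size s) && (nth false s i != x) then None
  else Some (inord (size s), x, all id (drop i.+1 s), all negb (drop i.+1 s)).
Proof.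
move=> il; elim/last_ind: s => [|s b IH] //.
rewrite size_rcons => hs; rewrite map_rcons foldl_rcons IH ?(ltnW hs) //.
rewrite nth_rcons.
case: ifP => [/andP [lt ne]|Hn].
  by rewrite ltnS (ltnW lt) lt (negbTE ne).
rewrite /= bit_of_bit inordK ?(ltnW hs) //.
have -> : (size s == l) = false by lia.
case: (ltngtP (size s) i) => [lt|gt|eq].
- have -> : (i < (size s).+1) = false by lia.
  rewrite /= !drop_oversize ?size_rcons //; lia.
- move: Hn; rewrite gt /= => /negbFE ne.
  have -> : (i < (size s).+1) = true by lia.
  rewrite ne drop_rcons // all_rcons all_rcons.
  by rewrite andbC (andbC _ (~~ b)).
- subst i; rewrite ltnS leqnn /=.
  rewrite !drop_oversize ?size_rcons //.
  by case: (b == x).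
lia. Qed.

Lemma encode_cons G2 n0 p ps :
  @encode G2 n0 (p :: ps) = map (@bit_letter G2) n0 ++ p.1 :: encode p.2 ps.
Proof. by rewrite /encode. Qed.

Lemma is_op_bit G2 (o : letter G2) : is_op o -> bit_of o = None.
Proof. by case: o => [[]|]. Qed.

Lemma run_op l (i : 'I_l) G2 (o : letter G2) x n rest : size n = l -> is_op o ->
  foldl (@tr l i G2) (Some (inord 0, x, true, true)) (map (@bit_letter G2) n ++ o :: rest) =
  if (nth false n i != x) || ((nat_of_ord i == 0) && bad o n) then None
  else foldl (@tr l i G2) (Some (inord 0, nextbit o n i, true, true)) rest.
Proof.
case: i => i il /=; move=> Hs Ho; rewrite foldl_cat run_bits ?Hs //.
case: (nth false n i =P x) => [<-|ne]; last first.
  by rewrite il /= run_none.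
rewrite il andbF /= (is_op_bit Ho) inordK // eqxx /=.
case: o Ho => [[]|g] //= _.
- case: eqP => [i0|//].
  case: n Hs => [|b t] Hs; first by rewrite -Hs in il.
  by rewrite i0 /= drop0; case: ifP => // _; rewrite run_none.
- case: eqP => [i0|//].
  case: n Hs => [|b t] Hs; first by rewrite -Hs in il.
  by rewrite i0 /= drop0; case: ifP => // _; rewrite run_none.
- by rewrite andbF.
Qed.

Lemma fwd l G2 (i : 'I_l) (ps : seq (letter G2 * seq bool)) : forall n0, size n0 = l ->
  all (fun n => size n == l) (map snd ps) -> all (@is_op G2) (map fst ps) ->
  last n0 (map snd ps) = nseq l false ->
  (forall j, j < size ps ->
     [/\ bval (nth [::] (n0 :: map snd ps) j.+1) =
           op_apply (nth (inl G0) (map fst ps) j) (bval (nth [::] (n0 :: map snd ps) j)),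
         nth (inl G0) (map fst ps) j = inl Ginc -> nth [::] (n0 :: map snd ps) j <> nseq l true &
         nth (inl G0) (map fst ps) j = inl Gdec -> nth [::] (n0 :: map snd ps) j <> nseq l false]) ->
  fin (foldl (@tr l i G2) (Some (inord 0, nth false n0 i, true, true)) (encode n0 ps)).
Proof.
elim: ps => [|[o n1] ps IH] n0 Hs Hsz Hop Hlast Htr.
  rewrite /encode /= cats0 run_bits ?Hs ?ltn_ord // eqxx andbF /= inordK // eqxx /=.
  by rewrite /= in Hlast; rewrite Hlast nth_nseq ltn_ord.
move: Hsz Hop => /= /andP [/eqP Hs1 Hsz] /andP [Ho Hop].
rewrite encode_cons /= run_op //.
have [Hv Hi Hd] := Htr 0 erefl; rewrite /= in Hv Hi Hd.
have [Hb Hn] : ~~ bad o n0 /\ (forall i, i < size n0 -> nth false n1 i = nextbit o n0 i).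
  by apply: arith_fwd; rewrite ?Hs1 ?Hs.

rewrite eqxx (negbTE Hb) andbF /= -Hn ?Hs ?ltn_ord //.
apply: IH => // j hj; exact: (Htr j.+1 hj).
Qed.

Lemma split_bits G2 (w : seq (letter G2)) : exists n rest,
  w = map (@bit_letter G2) n ++ rest /\
  (rest = [::] \/ exists o r, rest = o :: r /\ bit_of o = None).
Proof.
elim: w => [|a w [n [rest [-> H]]]]; first by exists [::], [::]; split=> //; left.
case E: (bit_of a) => [b|].
  exists (b :: n), rest; split=> //.
  by move: E; rewrite /bit_of; case: a => [[]|] //= [<-].
exists [::], (a :: (map (@bit_letter G2) n ++ rest)); split=> //; right.
by exists a, (map (@bit_letter G2) n ++ rest).
Qed.

Lemma run_long l i G2 x n rest : i < l -> l < size n ->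
  foldl (@tr l i G2) (Some (inord 0, x, true, true)) (map (@bit_letter G2) n ++ rest) = None.
Proof.
move=> il ln; rewrite -(cat_take_drop l n) map_cat -catA foldl_cat run_bits //; last first.
  by rewrite size_take ln.
case Hd: (drop l n) => [|b d]; first by move: (size_drop l n); rewrite Hd /=; lia.
case: ifP => _ /=; first by rewrite run_none.
rewrite size_take ln bit_of_bit inordK // eqxx.
by rewrite run_none.
Qed.

Lemma bit_none_op G2 (o : letter G2) : bit_of o = None -> is_op o.
Proof. by rewrite /bit_of; case: o => [[]|]. Qed.

Definition Good l G2 (n0 : seq bool) (ps : seq (letter G2 * seq bool)) : Prop :=
  [/\ all (fun n => size n == l) (map snd ps), all (@is_op G2) (map fst ps),
      last n0 (map snd ps) = nseq l false &
  (forall j, j < size ps ->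
     [/\ bval (nth [::] (n0 :: map snd ps) j.+1) =
           op_apply (nth (inl G0) (map fst ps) j) (bval (nth [::] (n0 :: map snd ps) j)),
         nth (inl G0) (map fst ps) j = inl Ginc -> nth [::] (n0 :: map snd ps) j <> nseq l true &
         nth (inl G0) (map fst ps) j = inl Gdec -> nth [::] (n0 :: map snd ps) j <> nseq l false])].

Lemma bwd l G2 (l0 : 0 < l) k : forall (w : seq (letter G2)) (xs : nat -> bool), size w < k ->
  (forall i : 'I_l, fin (foldl (@tr l i G2) (Some (inord 0, xs (nat_of_ord i), true, true)) w)) ->
  exists n0 (ps : seq (letter G2 * seq bool)),
  [/\ w = encode n0 ps, size n0 = l, (forall i, i < l -> nth false n0 i = xs i) & Good l n0 ps].
Proof.
elim: k => [//|k IH] w xs hw H.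
have [n [rest [Ew Hr]]] := split_bits w.
pose i0 := Ordinal l0.
have Hn : size n <= l.
  rewrite leqNgt; apply/negP => ln.
  by move: (H i0); rewrite Ew run_long.
have Hnth : forall i, i < l -> i < size n -> nth false n i = xs i.
  move=> i il iln; move: (H (Ordinal il)); rewrite Ew foldl_cat run_bits //=.
  by rewrite iln; case: eqP => // _; rewrite /= run_none.
case: Hr => [Er|[o [r [Er Ho]]]].
  subst rest.
  have Hl : size n = l.
    by move: (H i0); rewrite Ew cats0 run_bits //=; case: ifP => //= _; rewrite inordK ?ltnS // => /andP [/eqP].
  have Hx : forall i, i < l -> xs i = false.
    move=> i il; move: (H (Ordinal il)); rewrite Ew cats0 run_bits //=.
    by case: ifP => //= _; rewrite inordK ?ltnS // => /andP [_ /negbTE].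
  exists n, [::]; split=> //.
  - by move=> i il; apply: Hnth; rewrite ?Hl.
  split=> //=.
  apply: (@eq_from_nth _ false); rewrite ?size_nseq // => i il.
  have il2 : i < l by rewrite -Hl.
  by rewrite nth_nseq il2 Hnth // Hx.
have Hl : size n = l.
  move: (H i0); rewrite Ew Er foldl_cat run_bits //=.
  case: ifP => _ /=; first by rewrite run_none.
  rewrite Ho inordK ?ltnS //; case: eqP => // _; by rewrite run_none.
have Hop := bit_none_op Ho.
have Hall : forall i : 'I_l, [/\ nth false n i = xs i, (nat_of_ord i == 0) ==> ~~ bad o n &
   fin (foldl (@tr l i G2) (Some (inord 0, nextbit o n i, true, true)) r)].
  move=> i; move: (H i); rewrite Ew Er run_op //.
  case: ifP => // /norP [/negbNE/eqP -> nb] Hf; split => //.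
  by move: nb; case: (nat_of_ord i == 0) => //=.
have Hb : ~~ bad o n by have [_ Hi _] := Hall i0; move: Hi => /implyP; apply.
have [n1 [ps [Er' Hs1 Hn1 [Hsz Hops Hlast Htr]]]] : exists n0 (ps : seq (letter G2 * seq bool)),
  [/\ r = encode n0 ps, size n0 = l, (forall i, i < l -> nth false n0 i = nextbit o n i) & Good l n0 ps].
  apply: IH.
    by move: hw; rewrite Ew Er size_cat /=; lia.
  by move=> i; have [_ _ ->] := Hall i.
exists n, ((o, n1) :: ps); split=> //.
- by rewrite Ew Er encode_cons Er'.
- by move=> i il; have [-> _ _] := Hall (Ordinal il).
split=> //.
- by rewrite /= Hs1 eqxx.
- by rewrite /= Hop.
- case=> [_|j hj]; last exact: (Htr j hj).
  rewrite /=; split.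
  + apply: arith_bwd => //; first by rewrite Hs1 Hl.
    by move=> i; rewrite Hl => il; apply: Hn1.
  + move=> Eo En; move: Hb; rewrite Eo /= En nseq_all_id //.
  + move=> Eo En; move: Hb; rewrite Eo /= En nseq_all_negb //.
Qed.

Theorem claim4p8 :
  exists c : nat, forall l : nat, 0 < l -> forall G2 : finType,
    exists A : 'I_l -> dfa (letter G2),
      (forall i, #|dstate (A i)| <= c * l) /\
      (forall w : seq (letter G2), Lprime l w <-> (forall i, accepts (A i) w)).
Proof.
exists 17 => l l0 G2; exists (fun i => aut G2 i); split.
  move=> i; rewrite /= card_option !card_prod card_ord !card_bool; lia.
have Hz : forall n0, size n0 = l -> (forall i, i < l -> nth false n0 i = false) ->
    n0 = nseq l false.
  move=> n0 Hs Hn; apply: (@eq_from_nth _ false); rewrite ?size_nseq // => i il.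
  by rewrite nth_nseq -Hs il Hn // -Hs.
move=> w; split.
  case=> n0 [ps] /= [Ew /andP [/eqP Hs Hsz] Hop [H0 Hlast] Htr] i.
  have E : nth false n0 i = false by rewrite H0 nth_nseq ltn_ord.
  have := @fwd l G2 i ps n0 Hs Hsz Hop Hlast Htr.
  by rewrite E /accepts /= Ew.
move=> H.
have [n0 [ps [Ew Hs Hn [Hsz Hop Hlast Htr]]]] :=
  @bwd l G2 l0 (size w).+1 w (fun _ => false) (ltnSn _) H.
exists n0, ps; split=> //=.
- by rewrite Hs eqxx Hsz.
- by split=> //; apply: Hz.
Qed.
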